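(* Let $\bar u=(u_\beta)_{\beta<\alpha}$ be a densely non-increasing sequence of elements of a linear order $(U,<)$. If the range $\{u_\beta\mid\beta<\alpha\}$ of $\bar u$ is finite, then $\bar u$ is non-increasing.
   Context: A sequence $(u_\beta)_{\beta<\alpha}$ indexed by a countable ordinal is non-increasing if $\beta<\beta'<\alpha$ implies $u_\beta\ge u_{\beta'}$. It is densely non-increasing if for all $\gamma<\gamma'\le\alpha$, either $u_\beta=u_\gamma$ for all $\gamma\le\beta<\gamma'$, or there exist $\gamma\le\beta<\beta'<\gamma'$ with $u_\beta>u_{\beta'}$. *)

(* Defs.v *)
From mathcomp Require Import all_boot all_order.
Set Implicit Arguments. Unset Strict Implicit. Unset Printing Implicit Defensive.
Import Order.TTheory.
Local Open Scope order_scope.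

(* A countable ordinal alpha is represented (up to isomorphism) by a countable
   well-ordered type I: the elements of I are the indices beta < alpha.
   Bounds gamma' <= alpha are represented by [option I], [None] standing for alpha. *)

Definition well_ordered (d : Order.disp_t) (I : orderType d) : Prop :=
  well_founded (fun x y : I => x < y).

Definition countable_type (T : Type) : Prop :=
  exists f : T -> nat, injective f.

Definition lt_bound (d : Order.disp_t) (I : orderType d) (b : I) (g : option I) : bool :=
  if g is Some x then b < x else true.

Definition non_increasing (d : Order.disp_t) (I : orderType d)
    (dU : Order.disp_t) (U : orderType dU) (u : I -> U) : Prop :=
  forall b b' : I, b < b' -> u b' <= u b.

Definition densely_non_increasing (d : Order.disp_t) (I : orderType d)
    (dU : Order.disp_t) (U : orderType dU) (u : I -> U) : Prop :=
  forall (g : I) (g' : option I), lt_bound g g' ->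
    (forall b : I, g <= b -> lt_bound b g' -> u b = u g) \/
    (exists b b' : I, [/\ g <= b, b < b', lt_bound b' g' & u b' < u b]).

Definition finite_range (T : Type) (dU : Order.disp_t) (U : orderType dU)
    (u : T -> U) : Prop :=
  exists s : seq U, forall t : T, u t \in s.

(* Main.v *)
Require Import Defs.
From mathcomp Require Import all_boot all_order.
From Stdlib Require Import Classical.
Set Implicit Arguments. Unset Strict Implicit. Unset Printing Implicit Defensive.
Import Order.TTheory.
Local Open Scope order_scope.

Section S.
Variables (d : Order.disp_t) (I : orderType d) (dU : Order.disp_t) (U : orderType dU) (u : I -> U).

Lemma ex_min_wf (P : I -> Prop) : well_ordered I -> (exists z, P z) ->
  exists m, P m /\ forall w, P w -> m <= w.
Proof.
move=> wf [z Pz]; move: Pz; induction z as [z IH] using (well_founded_ind wf) => Pz.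
case: (classic (exists w, P w /\ w < z)) => [[w [Pw wz]]|H]; first exact: IH w wz Pw.
exists z; split=> // w Pw; rewrite leNgt; apply/negP => wz; apply: H; exists w; by split.
Qed.

Lemma fin_min (s : seq U) (P : I -> Prop) : (exists z, P z) -> (forall z, P z -> u z \in s) ->
  exists c, P c /\ forall z, P z -> u c <= u z.
Proof.
elim: s P => [|a s IH] P [z Pz] Hs; first by move: (Hs z Pz).
case: (classic (exists z, P z /\ u z < a)) => [[w [Pw wa]]|H].
- have Hs' : forall z, P z /\ u z < a -> u z \in s.
    move=> z0 [Pz0 za]; have := Hs z0 Pz0; rewrite in_cons => /ssrbool.orP[/eqP e|//].
    by move: za; rewrite e ltxx.
  have [c [[Pc ca] Hc]] := IH (fun z => P z /\ u z < a) (ex_intro _ w (conj Pw wa)) Hs'.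
  exists c; split=> // z' Pz'; case: (ltP (u z') a) => h; first exact: Hc.
  exact: le_trans (ltW ca) h.
- case: (classic (exists z, P z /\ u z = a)) => [[w [Pw wa]]|H2].
  + exists w; split=> // z' Pz'; rewrite wa leNgt; apply/negP => h; apply: H; eauto.
  + apply: IH (ex_intro _ z Pz) _ => z' Pz'; have := Hs z' Pz'; rewrite in_cons => /ssrbool.orP[/eqP e|//].
    by exfalso; apply: H2; eauto.
Qed.

Lemma succ_bound (b0 : I) : well_ordered I ->
  exists g' : option I, lt_bound b0 g' /\ forall b, lt_bound b g' -> b <= b0.
Proof.
move=> wf.
case: (classic (exists w, b0 < w)) => [Hw|H].
- have [w [bw Hm]] := ex_min_wf wf Hw.
  exists (Some w); split=> // b /= bw'; rewrite leNgt; apply/negP => h.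
  by have := Hm b h; rewrite leNgt bw'.
- exists None; split=> // b _; rewrite leNgt; apply/negP => h; apply: H; eauto.
Qed.

Lemma main_ind : well_ordered I -> densely_non_increasing u ->
  forall n (s : seq U), size s <= n -> forall y x, y < x ->
  (forall t, y <= t -> t <= x -> u t \in s) -> u x <= u y.
Proof.
move=> wf dn; elim=> [|n IH] s.
  by case: s => // _ y x yx Hs; have := Hs x (ltW yx) (lexx x).
move=> sz y x yx Hs; rewrite leNgt; apply/negP => uyx.
have [b0 [[yb0 xb0] Hb0]] := ex_min_wf (P := fun t => y <= t /\ u x <= u t) wf
  (ex_intro _ x (conj (ltW yx) (lexx _))).
have b0x : b0 <= x by apply: Hb0; split=> //; exact: ltW.
have yb0' : y < b0.
  rewrite lt_neqAle yb0 andbT; apply/eqP => e; subst b0.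
  by move: uyx; rewrite ltNge xb0.
have Hlt : forall t, y <= t -> t < b0 -> u t < u x.
  move=> t yt tb; rewrite ltNge; apply/negP => h.
  by have := Hb0 t (conj yt h); rewrite leNgt tb.
set s' := [seq v <- s | v < u x].
have sz' : size s' <= n.
  have : (size s' < size s)%N.
    rewrite size_filter -[X in (_ < X)%N](count_predC (fun v => v < u x)).
    rewrite -[X in (X < _)%N]addn0 ltn_add2l -has_count; apply/hasP; exists (u x); first exact: Hs (ltW yx) (lexx _).
    by rewrite /= ltxx.
  by move=> h; have : (size s' < n.+1)%N by apply: leq_trans h sz.
have NI : forall t1 t2, y <= t1 -> t1 < t2 -> t2 < b0 -> u t2 <= u t1.
  move=> t1 t2 yt1 t12 t2b; apply: (IH s' sz' t1 t2 t12) => t h1 h2.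
  rewrite mem_filter Hlt //; last by apply: le_lt_trans h2 t2b.
  - by rewrite Hs //; [apply: le_trans h1 | apply: le_trans (ltW (le_lt_trans h2 t2b)) b0x].
  - exact: le_trans h1.
have Hsc : forall z, y <= z /\ z < b0 -> u z \in s.
  by move=> z [h1 h2]; apply: Hs => //; exact: le_trans (ltW h2) b0x.
have [c [[yc cb] Hc]] := fin_min (P := fun t => y <= t /\ t < b0)
  (ex_intro _ y (conj (lexx _) yb0')) Hsc.
have Cst : forall t, c <= t -> t < b0 -> u t = u c.
  move=> t ct tb; apply/eqP; rewrite eq_le Hc; last by split=> //; exact: le_trans ct.
  rewrite andbT; rewrite le_eqVlt in ct; case/ssrbool.orP: ct => [/eqP->//|ct].
  exact: NI.
have ucb : u c < u b0 by apply: lt_le_trans (Hlt c yc cb) xb0.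
have [g' [bg' Hg']] := succ_bound b0 wf.
have cg' : lt_bound c g' by case: g' bg' Hg' => //= w bw _; exact: lt_trans cb bw.
case: (dn c g' cg') => [H|[b [b' [cb1 bb' b'g' ub]]]].
- by move: ucb; rewrite -(H b0 (ltW cb) bg') ltxx.
- have b'b0 := Hg' b' b'g'.
  have bb0 : b < b0 := lt_le_trans bb' b'b0.
  move: b'b0; rewrite le_eqVlt => /ssrbool.orP[/eqP e|b'b0].
  + subst b'; move: ub; rewrite (Cst b cb1 bb0) => h.
    by move: (lt_trans h ucb); rewrite ltxx.
  + by move: ub; rewrite (Cst b cb1 bb0) (Cst b' (ltW (le_lt_trans cb1 bb')) b'b0) ltxx.
Qed.

End S.

Theorem mainTheorem13 (d : Order.disp_t) (I : orderType d)
  (dU : Order.disp_t) (U : orderType dU) (u : I -> U) :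
  well_ordered I -> countable_type I ->
  densely_non_increasing u -> finite_range u -> non_increasing u.
Proof.
move=> wf _ dn [s Hs] b b' bb'.
exact: (main_ind wf dn (leqnn (size s)) bb' (fun t _ _ => Hs t)).
Qed.
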